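(* Let $\mathbf{A}\in\mathbb{C}^{M\times N_a}$, $\mathbf{B}\in\mathbb{C}^{M\times N_b}$ have unit-$\ell_2$-norm columns with coherence parameters $\mu_a,\mu_b,\mu_m$. Let $\mathcal{X}\subseteq\{1,\dots,N_a\}$, $|\mathcal{X}|=n_x$, and $\mathcal{E}\subseteq\{1,\dots,N_b\}$, $|\mathcal{E}|=n_e$, and assume $$(1-\mu_a(n_x-1))\,[1-\mu_b(n_e-1)]^+>n_xn_e\mu_m^2 .$$ Then $1-\mu_b(n_e-1)>0$, $\mathbf{B}_{\mathcal{E}}^H\mathbf{B}_{\mathcal{E}}$ is invertible, and with $\mathbf{R}_{\mathcal{E}}=\mathbf{I}_M-\mathbf{B}_{\mathcal{E}}\mathbf{B}_{\mathcal{E}}^\dagger$ the matrix $\mathbf{A}_{\mathcal{X}}^H\mathbf{R}_{\mathcal{E}}\mathbf{A}_{\mathcal{X}}$ is invertible with $$\big\|(\mathbf{A}_{\mathcal{X}}^H\mathbf{R}_{\mathcal{E}}\mathbf{A}_{\mathcal{X}})^{-1}\big\|_2\le\frac{1}{1-\mu_a(n_x-1)-\dfrac{n_xn_e\mu_m^2}{1-\mu_b(n_e-1)}}.$$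
   Context: Coherence parameters: $\mu_a=\max_{k\ne\ell}|\mathbf{a}_k^H\mathbf{a}_\ell|$, $\mu_b=\max_{k\ne\ell}|\mathbf{b}_k^H\mathbf{b}_\ell|$, $\mu_m=\max_{k,\ell}|\mathbf{a}_k^H\mathbf{b}_\ell|$. $[x]^+=\max\{x,0\}$. $\mathbf{M}_{\mathcal{S}}$ is the column submatrix indexed by $\mathcal{S}$; $\mathbf{M}^\dagger=(\mathbf{M}^H\mathbf{M})^{-1}\mathbf{M}^H$; $\|\cdot\|_2$ of a matrix is the spectral norm. *)

(* Defs.v *)
(* Complex scalars: an arbitrary numClosedFieldType R
   (algebraically closed field with conjugation and norm, e.g. algC). *)
From HB Require Import structures.
From mathcomp Require Import all_boot all_order all_algebra.
Set Implicit Arguments. Unset Strict Implicit. Unset Printing Implicit Defensive.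
Import Order.TTheory GRing.Theory Num.Theory.
Local Open Scope ring_scope.

Definition ctmx (R : numClosedFieldType) m n (A : 'M[R]_(m, n)) : 'M[R]_(n, m) :=
  (map_mx Num.conj A)^T.

Definition cdot (R : numClosedFieldType) m (a b : 'cV[R]_m) : R :=
  \sum_(i < m) (a i 0)^* * b i 0.

Definition vnorm2 (R : numClosedFieldType) m (v : 'cV[R]_m) : R :=
  sqrtC (\sum_(i < m) `|v i 0| ^+ 2).

Definition unit_cols (R : numClosedFieldType) m n (A : 'M[R]_(m, n)) : Prop :=
  forall j : 'I_n, vnorm2 (col j A) = 1.

(* Coherence parameters (max over the empty index set is 0). *)
Definition mutual_coh (R : numClosedFieldType) m n (A : 'M[R]_(m, n)) : R :=
  \big[Order.max/0]_(k < n) \big[Order.max/0]_(l < n | k != l)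
     `|cdot (col k A) (col l A)|.

Definition cross_coh (R : numClosedFieldType) m na nb
  (A : 'M[R]_(m, na)) (B : 'M[R]_(m, nb)) : R :=
  \big[Order.max/0]_(k < na) \big[Order.max/0]_(l < nb)
     `|cdot (col k A) (col l B)|.

(* Column submatrix M_S indexed by S (columns in increasing index order). *)
Definition colsubset (R : Type) m n (A : 'M[R]_(m, n)) (S : {set 'I_n})
  : 'M[R]_(m, #|S|) :=
  colsub (fun i : 'I_#|S| => enum_val i) A.

(* Spectral-norm bound ||A||_2 <= c, i.e. sup_{v<>0} ||Av||/||v|| <= c,
   written out: ||A v||_2 <= c ||v||_2 for all v. *)
Definition specnorm_le (R : numClosedFieldType) m n (A : 'M[R]_(m, n)) (c : R)
  : Prop :=
  forall v : 'cV[R]_n, vnorm2 (A *m v) <= c * vnorm2 v.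

(* Main.v *)
Require Import Defs.
From HB Require Import structures.
From mathcomp Require Import all_boot all_order all_algebra.
From mathcomp Require Import ring.
Import Order.TTheory GRing.Theory Num.Theory.
Local Open Scope ring_scope.
Set Implicit Arguments. Unset Strict Implicit. Unset Printing Implicit Defensive.

Section Aux.
Variable R : numClosedFieldType.

Definition n2 m (v : 'cV[R]_m) : R := \sum_(i < m) `|v i 0| ^+ 2.

Lemma n2_ge0 m (v : 'cV[R]_m) : 0 <= n2 v.
Proof. by apply: sumr_ge0 => i _; rewrite exprn_ge0. Qed.

Lemma vnorm2_ge0 m (v : 'cV[R]_m) : 0 <= vnorm2 v.
Proof. by rewrite /vnorm2 sqrtC_ge0 n2_ge0. Qed.

Lemma vnorm2_sq m (v : 'cV[R]_m) : vnorm2 v ^+ 2 = n2 v.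
Proof. by rewrite /vnorm2 sqrtCK. Qed.

Lemma ctmxE m n (A : 'M[R]_(m,n)) i j : ctmx A i j = (A j i)^*.
Proof. by rewrite /ctmx !mxE. Qed.

Lemma ctmx_mul m n p (A : 'M[R]_(m,n)) (B : 'M[R]_(n,p)) :
  ctmx (A *m B) = ctmx B *m ctmx A.
Proof.
apply/matrixP => i j; rewrite ctmxE !mxE rmorph_sum; apply: eq_bigr => k _.
by rewrite !ctmxE rmorphM mulrC.
Qed.

Lemma ctmxK m n (A : 'M[R]_(m,n)) : ctmx (ctmx A) = A.
Proof. by apply/matrixP => i j; rewrite !ctmxE conjCK. Qed.

Lemma cdotE m (a b : 'cV[R]_m) : cdot a b = (ctmx a *m b) 0 0.
Proof. by rewrite mxE; apply: eq_bigr => i _; rewrite ctmxE. Qed.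

Lemma cdotC m (a b : 'cV[R]_m) : cdot a b = (cdot b a)^*.
Proof.
rewrite /cdot rmorph_sum; apply: eq_bigr => i _.
by rewrite rmorphM /= conjCK mulrC.
Qed.

Lemma cdot_vv m (v : 'cV[R]_m) : cdot v v = n2 v.
Proof. by apply: eq_bigr => i _; rewrite normCKC. Qed.


Lemma real_CS n (x y : 'I_n -> R) :
  (forall i, x i \is Num.real) -> (forall i, y i \is Num.real) ->
  (\sum_i x i * y i) ^+ 2 <= (\sum_i x i ^+ 2) * (\sum_i y i ^+ 2).
Proof.
move=> xr yr.
set D := \sum_i \sum_j (x i * y j - x j * y i) ^+ 2.
have D0 : 0 <= D.
  apply: sumr_ge0 => i _; apply: sumr_ge0 => j _.
  by rewrite -realEsqr rpredB // rpredM.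
have E : D = 2 * ((\sum_i x i ^+ 2) * (\sum_i y i ^+ 2) - (\sum_i x i * y i) ^+ 2).
  rewrite /D.
  have -> : \sum_i \sum_j (x i * y j - x j * y i) ^+ 2 =
     \sum_i \sum_j (x i ^+ 2 * y j ^+ 2) + \sum_i \sum_j (y i ^+ 2 * x j ^+ 2)
     - 2 * \sum_i \sum_j (x i * y i) * (x j * y j).
    rewrite mulr_sumr -big_split -sumrB /=; apply: eq_bigr => i _.
    rewrite mulr_sumr -big_split -sumrB /=; apply: eq_bigr => j _.
    ring.
  have E1 : \sum_i \sum_j (x i ^+ 2 * y j ^+ 2) = (\sum_i x i ^+ 2) * (\sum_i y i ^+ 2).
    by rewrite big_distrlr.
  have E2 : \sum_i \sum_j (y i ^+ 2 * x j ^+ 2) = (\sum_i x i ^+ 2) * (\sum_i y i ^+ 2).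
    by rewrite mulrC big_distrlr.
  have E3 : \sum_i \sum_j (x i * y i) * (x j * y j) = (\sum_i x i * y i) ^+ 2.
    by rewrite expr2 big_distrlr.
  rewrite E1 E2 E3; ring.
by rewrite -subr_ge0 -(pmulr_rge0 _ (ltr0Sn _ 1)) -E.
Qed.


Lemma cdot_CS m (a b : 'cV[R]_m) : `|cdot a b| <= vnorm2 a * vnorm2 b.
Proof.
apply: (le_trans (ler_norm_sum _ _ _)).
rewrite (eq_bigr (fun i => `|a i 0| * `|b i 0|)); last first.
  by move=> i _; rewrite normrM norm_conjC.
have S0 : 0 <= \sum_(i < m) `|a i 0| * `|b i 0|.
  by apply: sumr_ge0 => i _; rewrite mulr_ge0.
rewrite -ler_sqr ?inE ?mulr_ge0 ?vnorm2_ge0 //.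
rewrite exprMn !vnorm2_sq.
exact: (real_CS (x:=fun i => `|a i 0|) (y:=fun i => `|b i 0|) (fun i => normr_real _) (fun i => normr_real _)).
by rewrite qualifE /= mulr_ge0 ?vnorm2_ge0.
Qed.

Lemma sumabs_CS n (v : 'cV[R]_n) : (\sum_i `|v i 0|) ^+ 2 <= n%:R * n2 v.
Proof.
have := @real_CS n (fun i => `|v i 0|) (fun _ => 1) (fun i => normr_real _)
  (fun _ => real1 _).
rewrite (eq_bigr (fun i => `|v i 0|)) ?sumr_const ?card_ord; last by move=> i _; rewrite mulr1.
by rewrite expr1n mulrC.
Qed.

Lemma bigmax_props (I : finType) (P : pred I) (F : I -> R) :
  (forall i, P i -> 0 <= F i) ->
  0 <= \big[Order.max/0]_(i | P i) F i /\
  forall i, P i -> F i <= \big[Order.max/0]_(i | P i) F i.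
Proof.
move=> F0.
suff H : forall s : seq I, 0 <= \big[Order.max/0]_(i <- s | P i) F i /\
   forall i, i \in s -> P i -> F i <= \big[Order.max/0]_(i <- s | P i) F i.
  by have [H1 H2] := H (index_enum I); split=> // i Pi; apply: H2; rewrite ?mem_index_enum.
elim=> [|a s [IH1 IH2]]; first by rewrite big_nil; split=> // i.
rewrite big_cons; case: ifP => Pa; last first.
  split=> // i; rewrite inE => /orP [/eqP -> | ]; first by rewrite Pa.
  exact: IH2.
set m := \big[_/_]_(_ <- _ | _) _ in IH1 IH2 *.
have Fa := F0 a Pa.
have [le|lt] := real_leP (ger0_real Fa) (ger0_real IH1).
  split=> // i; rewrite inE => /orP [/eqP -> _ | iin Pi] //; exact: IH2.
split; first exact: Fa.
move=> i; rewrite inE => /orP [/eqP -> _ | iin Pi] //.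
exact: (le_trans (IH2 i iin Pi) (ltW lt)).
Qed.

Lemma unit_n2 m n (A : 'M[R]_(m, n)) : unit_cols A -> forall j, n2 (col j A) = 1.
Proof. by move=> h j; rewrite -vnorm2_sq h expr1n. Qed.

Lemma aux_bound (d N a b : R) : 0 < d -> 0 <= a -> 0 <= b ->
  d * a ^+ 2 <= N -> N <= a * b -> N <= b ^+ 2 / d.
Proof.
move=> d0 a0 b0 h1 h2.
have bd0 : 0 <= b ^+ 2 / d by apply: divr_ge0; [apply: exprn_ge0 | apply: ltW].
have [a00|an0] := eqVneq a 0; first by rewrite a00 mul0r in h2; apply: (le_trans h2 bd0).
have ap : 0 < a by rewrite lt0r an0.
have h3 : d * a <= b.
  by rewrite -(ler_pM2l ap) mulrCA -expr2; exact: le_trans h1 h2.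
have h4 : a <= b / d by rewrite ler_pdivlMr // mulrC.
apply: (le_trans h2); rewrite expr2 mulrAC.
by apply: ler_wpM2r.
Qed.


Lemma n2_lower m n (K : 'M[R]_(m,n)) (mu : R) (v : 'cV[R]_n) :
  (forall j, n2 (col j K) = 1) -> 0 <= mu ->
  (forall i j, i != j -> `|cdot (col i K) (col j K)| <= mu) ->
  (1 - mu * (n%:R - 1)) * n2 v <= n2 (K *m v).
Proof.
move=> u1 mu0 coh.
set Q := \sum_i \sum_k (v k 0)^* * cdot (col k K) (col i K) * v i 0.
have EQ : n2 (K *m v) = Q.
  rewrite -cdot_vv cdotE ctmx_mul.
  have -> : ctmx v *m ctmx K *m (K *m v) = ctmx v *m (ctmx K *m K) *m v.
    by rewrite !mulmxA.
  rewrite mxE /Q; apply: eq_bigr => i _.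
  rewrite mxE big_distrl /=; apply: eq_bigr => k _.
  rewrite ctmxE; congr (_ * _ * _).
  rewrite /cdot mxE; apply: eq_bigr => l _.
  by rewrite ctmxE !mxE.
set T := \sum_i \sum_(k | k != i) (v k 0)^* * cdot (col k K) (col i K) * v i 0.
have EQ2 : Q = n2 v + T.
  rewrite /Q /n2 /T -big_split /=; apply: eq_bigr => i _.
  by rewrite (bigD1 i) //= cdot_vv u1 mulr1 normCKC.
pose S : R := \sum_i `|v i 0|.
have Tb : `|T| <= mu * (n%:R * n2 v - n2 v).
  apply: (@le_trans _ _ (\sum_i \sum_(k | k != i) `|v k 0| * mu * `|v i 0|)).
    apply: (le_trans (ler_norm_sum _ _ _)); apply: ler_sum => i _.
    apply: (le_trans (ler_norm_sum _ _ _)); apply: ler_sum => k ki.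
    rewrite !normrM norm_conjC.
    apply: ler_wpM2r; first exact: normr_ge0.
    apply: ler_wpM2l; first exact: normr_ge0.
    exact: coh.
  have -> : \sum_i \sum_(k | k != i) `|v k 0| * mu * `|v i 0| = mu * (S ^+ 2 - n2 v).
    have e1 : forall i, \sum_(k | k != i) `|v k 0| * mu * `|v i 0|
              = mu * (S * `|v i 0| - `|v i 0| ^+ 2).
      move=> i; rewrite -big_distrl -big_distrl /=.
      have -> : \sum_(k | k != i) `|v k 0| = S - `|v i 0|.
        by rewrite /S [X in _ = X - _](bigD1 i) //= addrC addrK.
      ring.
    rewrite (eq_bigr _ (fun i _ => e1 i)) -mulr_sumr sumrB -mulr_sumr.
    by rewrite expr2.
  apply: ler_wpM2l => //; apply: lerB => //; exact: sumabs_CS.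
have Tr : T \is Num.real.
  have -> : T = n2 (K *m v) - n2 v by rewrite EQ EQ2 addrAC subrr add0r.
  by rewrite rpredB // ger0_real // n2_ge0.
have := real_lerNnormlW Tr Tb => h.
rewrite EQ EQ2.
have -> : (1 - mu * (n%:R - 1)) * n2 v = n2 v + - (mu * (n%:R * n2 v - n2 v)) by ring.
by rewrite lerD2l.
Qed.

Lemma n2_upper p n (K : 'M[R]_(p,n)) (mu : R) (v : 'cV[R]_n) :
  0 <= mu -> (forall j i, `|K j i| <= mu) ->
  n2 (K *m v) <= p%:R * n%:R * mu ^+ 2 * n2 v.
Proof.
move=> mu0 h.
pose S : R := \sum_i `|v i 0|.
have S0 : 0 <= S by apply: sumr_ge0.
have hj : forall j, `|(K *m v) j 0| ^+ 2 <= mu ^+ 2 * (n%:R * n2 v).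
  move=> j; rewrite mxE.
  have h1 : `|\sum_i K j i * v i 0| <= mu * S.
    apply: (le_trans (ler_norm_sum _ _ _)); rewrite /S mulr_sumr.
    by apply: ler_sum => i _; rewrite normrM; apply: ler_wpM2r.
  apply: (@le_trans _ _ ((mu * S) ^+ 2)).
    by apply: lerXn2r; rewrite // qualifE /= ?mulr_ge0.
  by rewrite exprMn; apply: ler_wpM2l; [apply: exprn_ge0 | apply: sumabs_CS].
apply: (le_trans (ler_sum _ (fun j _ => hj j))).
rewrite sumr_const card_ord -[_ *+ p]mulr_natl le_eqVlt; apply/orP; left; apply/eqP; ring.
Qed.


Lemma quad_coercive n (K : 'M[R]_n) (c : R) : 0 < c ->
  (forall v : 'cV[R]_n, c * n2 v <= (ctmx v *m (K *m v)) 0 0) ->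
  forall v, c * vnorm2 v <= vnorm2 (K *m v).
Proof.
move=> c0 h v.
have := h v; rewrite -cdotE => hv.
have q0 : 0 <= cdot v (K *m v).
  apply: le_trans _ hv.
  by apply: mulr_ge0; [exact: ltW | exact: n2_ge0].
have hq : c * vnorm2 v ^+ 2 <= vnorm2 v * vnorm2 (K *m v).
  rewrite vnorm2_sq; apply: (le_trans hv); rewrite -(ger0_norm q0).
  exact: cdot_CS.
have [s0|sn0] := eqVneq (vnorm2 v) 0; first by rewrite s0 mulr0 vnorm2_ge0.
have sp : 0 < vnorm2 v by rewrite lt0r sn0 vnorm2_ge0.
by rewrite -(ler_pM2l sp) mulrCA -expr2.
Qed.

Lemma vnorm2_0 m : vnorm2 (0 : 'cV[R]_m) = 0.
Proof.
rewrite /vnorm2 (eq_bigr (fun _ => 0)) ?big1 ?sqrtC0 // => i _.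
by rewrite mxE normr0 expr0n.
Qed.

Lemma coercive_unit n (K : 'M[R]_n) (c : R) : 0 < c ->
  (forall v, c * vnorm2 v <= vnorm2 (K *m v)) ->
  K \in unitmx /\ specnorm_le (invmx K) (1 / c).
Proof.
move=> c0 h.
have inj : forall v : 'cV[R]_n, K *m v = 0 -> v = 0.
  move=> v Kv; have := h v; rewrite Kv vnorm2_0 pmulr_rle0 // /vnorm2 sqrtC_le0.
  move=> /eqP hn; apply/matrixP => i j; rewrite (ord1 j) [RHS]mxE.
  have := psumr_eq0P (fun i _ => exprn_ge0 2 (normr_ge0 (v i 0))) hn (i:=i) isT.
  by move/eqP; rewrite expf_eq0 /= normr_eq0 => /eqP.
have U : K \in unitmx.
  rewrite -unitmx_tr -row_free_unit -kermx_eq0; apply/eqP/matrixP => i j.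
  set u := row i (kermx K^T).
  have uK : u *m K^T = 0 by rewrite /u -row_mul mulmx_ker row0.
  have : K *m u^T = 0 by rewrite -[K]trmxK -trmx_mul uK trmx0.
  move/inj => /matrixP /(_ j 0); rewrite !mxE => ->.
  by [].
split=> // u.
set v := invmx K *m u.
have Kv : K *m v = u by rewrite /v mulmxA mulmxV // mul1mx.
have := h v; rewrite Kv => hv.
rewrite mul1r -(ler_pM2l c0) mulrA mulrV ?unitfE ?gt_eqF // mul1r.
exact: hv.
Qed.


Lemma mutual_coh_ge0 m n (A : 'M[R]_(m,n)) : 0 <= mutual_coh A.
Proof.
have F0 : forall k0 : 'I_n, 0 <= \big[Order.max/0]_(l0 < n | k0 != l0) `|cdot (col k0 A) (col l0 A)|.
  move=> k0.
  by have [] := @bigmax_props _ (fun l0 => k0 != l0) (fun l0 => `|cdot (col k0 A) (col l0 A)|) (fun l0 _ => normr_ge0 _).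
by have [] := @bigmax_props _ xpredT _ (fun k0 _ => F0 k0).
Qed.

Lemma coh_sub m n (A : 'M[R]_(m,n)) (X : {set 'I_n}) (i j : 'I_#|X|) : i != j ->
  `|cdot (col i (colsubset A X)) (col j (colsubset A X))| <= mutual_coh A.
Proof.
move=> ij; rewrite /colsubset !col_colsub.
set k := enum_val i; set l := enum_val j.
have kl : k != l by apply: contra ij => /eqP /enum_val_inj ->.
have F0 : forall k0 : 'I_n, 0 <= \big[Order.max/0]_(l0 < n | k0 != l0) `|cdot (col k0 A) (col l0 A)|.
  move=> k0.
  by have [] := @bigmax_props _ (fun l0 => k0 != l0) (fun l0 => `|cdot (col k0 A) (col l0 A)|) (fun l0 _ => normr_ge0 _).
have [_ Hin] := @bigmax_props _ (fun l0 => k != l0) (fun l0 => `|cdot (col k A) (col l0 A)|) (fun l0 _ => normr_ge0 _).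
have [_ Hout] := @bigmax_props _ xpredT _ (fun k0 _ => F0 k0).
exact: le_trans (Hin l kl) (Hout k isT).
Qed.

Lemma cross_coh_ge0 m na nb (A : 'M[R]_(m,na)) (B : 'M[R]_(m,nb)) : 0 <= cross_coh A B.
Proof.
have F0 : forall k0 : 'I_na, 0 <= \big[Order.max/0]_(l0 < nb) `|cdot (col k0 A) (col l0 B)|.
  move=> k0.
  by have [] := @bigmax_props _ xpredT (fun l0 => `|cdot (col k0 A) (col l0 B)|) (fun l0 _ => normr_ge0 _).
by have [] := @bigmax_props _ xpredT _ (fun k0 _ => F0 k0).
Qed.

Lemma cross_sub m na nb (A : 'M[R]_(m,na)) (B : 'M[R]_(m,nb)) (X : {set 'I_na})
  (E : {set 'I_nb}) (j : 'I_#|E|) (i : 'I_#|X|) :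
  `|(ctmx (colsubset B E) *m colsubset A X) j i| <= cross_coh A B.
Proof.
have -> : (ctmx (colsubset B E) *m colsubset A X) j i =
          (cdot (col (enum_val i) A) (col (enum_val j) B))^*.
  rewrite -cdotC /cdot mxE; apply: eq_bigr => l _.
  by rewrite ctmxE /colsubset !mxE.
rewrite norm_conjC.
set k := enum_val i; set l := enum_val j.
have F0 : forall k0 : 'I_na, 0 <= \big[Order.max/0]_(l0 < nb) `|cdot (col k0 A) (col l0 B)|.
  move=> k0.
  by have [] := @bigmax_props _ xpredT (fun l0 => `|cdot (col k0 A) (col l0 B)|) (fun l0 _ => normr_ge0 _).
have [_ Hin] := @bigmax_props _ xpredT (fun l0 => `|cdot (col k A) (col l0 B)|) (fun l0 _ => normr_ge0 _).
have [_ Hout] := @bigmax_props _ xpredT _ (fun k0 _ => F0 k0).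
exact: le_trans (Hin l isT) (Hout k isT).
Qed.

End Aux.

Theorem mainTheorem8 (R : numClosedFieldType) (M Na Nb : nat)
  (A : 'M[R]_(M, Na)) (B : 'M[R]_(M, Nb))
  (X : {set 'I_Na}) (E : {set 'I_Nb}) :
  unit_cols A -> unit_cols B ->
  let mua := mutual_coh A in
  let mub := mutual_coh B in
  let mum := cross_coh A B in
  let nx : R := (#|X|)%:R in
  let ne : R := (#|E|)%:R in
  (1 - mua * (nx - 1)) * Num.max 0 (1 - mub * (ne - 1)) > nx * ne * mum ^+ 2 ->
  let AX := colsubset A X in
  let BE := colsubset B E in
  [/\ 0 < 1 - mub * (ne - 1),
      ctmx BE *m BE \in unitmx &
      let RE := 1%:M - BE *m (invmx (ctmx BE *m BE) *m ctmx BE) in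
      let G := ctmx AX *m RE *m AX in
      G \in unitmx /\
      specnorm_le (invmx G)
        (1 / (1 - mua * (nx - 1) - nx * ne * mum ^+ 2 / (1 - mub * (ne - 1))))].
Proof.
move=> hA hB mua mub mum nx ne Hyp AX BE.
have mua0 : 0 <= mua := mutual_coh_ge0 A.
have mub0 : 0 <= mub := mutual_coh_ge0 B.
have mum0 : 0 <= mum := cross_coh_ge0 A B.
set d := 1 - mub * (ne - 1).
set P := 1 - mua * (nx - 1).
set Kc := nx * ne * mum ^+ 2.
have Kc0 : 0 <= Kc by rewrite /Kc mulr_ge0 ?exprn_ge0 // mulr_ge0 ?ler0n.
have dreal : d \is Num.real by rewrite /d rpredB ?rpredM ?rpredB ?ger0_real ?ler0n.
have d0 : 0 < d.
  move: Hyp; have [dle|dgt] := real_leP dreal (real0 R) => //.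
  by rewrite mulr0 => /(le_lt_trans Kc0); rewrite ltxx.
move: Hyp; rewrite (_ : Num.max 0 d = d); last first.
  have [dle|dgt] := real_leP dreal (real0 R) => //.
  by have := lt_le_trans d0 dle; rewrite ltxx.
move=> Hyp.
set c := P - Kc / d.
have c0 : 0 < c by rewrite subr_gt0 ltr_pdivrMr.
have uAX : forall j, n2 (col j AX) = 1 by move=> j; rewrite /AX /colsubset col_colsub unit_n2.
have uBE : forall j, n2 (col j BE) = 1 by move=> j; rewrite /BE /colsubset col_colsub unit_n2.
have cAX : forall i j, i != j -> `|cdot (col i AX) (col j AX)| <= mua.
  by move=> i j; apply: coh_sub.
have cBE : forall i j, i != j -> `|cdot (col i BE) (col j BE)| <= mub.
  by move=> i j; apply: coh_sub.
set H := ctmx BE *m BE.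
have Hq : forall z, d * n2 z <= (ctmx z *m (H *m z)) 0 0.
  move=> z; rewrite /H.
  have -> : ctmx z *m (ctmx BE *m BE *m z) = ctmx (BE *m z) *m (BE *m z)
    by rewrite ctmx_mul !mulmxA.
  rewrite -cdotE cdot_vv.
  exact: n2_lower.
have [Hunit _] := coercive_unit d0 (quad_coercive d0 Hq).
split=> // RE G.
have Gq : forall v, c * n2 v <= (ctmx v *m (G *m v)) 0 0.
  move=> v.
  set w := AX *m v.
  set y := ctmx BE *m w.
  set z := invmx H *m y.
  have Hz : H *m z = y by rewrite /z mulmxA mulmxV // mul1mx.
  have Q : (ctmx v *m (G *m v)) 0 0 = n2 w - n2 (BE *m z).
    have -> : ctmx v *m (G *m v) = ctmx w *m (RE *m w) by rewrite /G /w ctmx_mul !mulmxA.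
    have -> : RE *m w = w - BE *m z by rewrite /RE mulmxBl mul1mx /z /y !mulmxA.
    have e1 : ctmx w *m (BE *m z) = ctmx (BE *m z) *m (BE *m z).
      rewrite mulmxA (_ : ctmx w *m BE = ctmx y); last by rewrite /y ctmx_mul ctmxK.
      by rewrite -Hz /H !ctmx_mul ctmxK !mulmxA.
    rewrite mulmxBr e1.
    have -> : forall (U V : 'M[R]_1), (U - V) 0 0 = U 0 0 - V 0 0 by move=> U V; rewrite !mxE.
    by rewrite -!cdotE !cdot_vv.
  have Lw : P * n2 v <= n2 w by exact: n2_lower.
  have Ly : n2 y <= ne * nx * mum ^+ 2 * n2 v.
    by rewrite /y /w mulmxA; apply: n2_upper => // j i; exact: cross_sub.
  have eN : n2 (BE *m z) = cdot z y.
    by rewrite -cdot_vv !cdotE -Hz /H ctmx_mul !mulmxA.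
  have Lz : n2 (BE *m z) <= n2 y / d.
    have := aux_bound d0 (vnorm2_ge0 z) (vnorm2_ge0 y).
    rewrite vnorm2_sq vnorm2_sq; apply.
      exact: n2_lower.
    rewrite eN; apply: le_trans (real_ler_norm _) (cdot_CS z y).
    by rewrite -eN ger0_real // n2_ge0.
  rewrite Q.
  have -> : c * n2 v = P * n2 v - (ne * nx * mum ^+ 2 * n2 v) / d by rewrite /c /Kc; ring.
  apply: lerB Lw _; apply: le_trans Lz _.
  by apply: ler_wpM2r Ly; rewrite invr_ge0 ltW.
have [GU Gn] := coercive_unit c0 (quad_coercive c0 Gq).
by split.
Qed.
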